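(* Let $E$ be a nonzero real Banach space, let $\widetilde K$ be a nonempty $w(E^*,E)$-compact convex subset of $E^*$, and let $\tau_{\widetilde K}(x)=\max_{x^*\in\widetilde K}\langle x,x^*\rangle$ for $x\in E$. Then for all $(y^*,y^{**})\in E^*\times E^{**}$: $(y^*,y^{**})\in G\big((\partial\tau_{\widetilde K})^{\mathbb F}\big)$ if and only if $y^*\in\widetilde K$ and $\langle y^*,y^{**}\rangle=\sup_{x^*\in\widetilde K}\langle x^*,y^{**}\rangle$.
   Context: $E^*$, $E^{**}$ are dual and bidual with their pairings. For proper convex lsc $f$ on $E$, $x^*\in\partial f(x)$ iff $f(x)+f^*(x^* )=\langle x,x^*\rangle$ ($f^*$ the Fenchel conjugate); $\partial\tau_{\widetilde K}$ is closed, monotone and quasidense. For a multifunction $S\colon E\rightrightarrows E^*$ with nonempty graph $G(S)$: closed means $G(S)$ norm-closed; monotone means $\langle s-t,s^*-t^*\rangle\ge0$ on $G(S)$; quasidense means for every $(x,x^* )$, $\inf_{(s,s^* )\in G(S)}[\tfrac12\|s-x\|^2+\tfrac12\|s^*-x^*\|^2+\langle s-x,s^*-x^*\rangle]\le0$. Let $\varphi_S(x,x^* )=\sup_{(s,s^* )\in G(S)}[\langle s,x^*\rangle+\langle x,s^*\rangle-\langle s,s^*\rangle]$, and $\varphi_S^*$ its conjugate on $E^*\times E^{**}$ under the pairing $\langle (x,x^* ),(y^*,y^{**})\rangle=\langle x,y^*\rangle+\langle x^*,y^{**}\rangle$. For $S$ closed, monotone, quasidense, the Fitzpatrick extension $S^{\mathbb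 F}\colon E^*\rightrightarrows E^{**}$ is given by $(y^*,y^{**})\in G(S^{\mathbb F})$ iff $\varphi_S^*(y^*,y^{**})=\langle y^*,y^{**}\rangle$. *)

(* Defs.v *)
From HB Require Import structures.
From mathcomp Require Import all_boot all_order all_algebra.
From mathcomp Require Import all_classical all_reals all_analysis.
Set Implicit Arguments. Unset Strict Implicit. Unset Printing Implicit Defensive.
Import Order.TTheory GRing.Theory Num.Theory.
Import numFieldNormedType.Exports.
Local Open Scope classical_set_scope.
Local Open Scope ring_scope.

Record dual (R : realType) (E : normedModType R) := Dual {
  dual_fun :> E -> R;
  dual_lin : forall (a : R) (x y : E), dual_fun (a *: x + y) = a * dual_fun x + dual_fun y;
  dual_bdd : exists C : R, forall x : E, `|dual_fun x| <= C * `|x| }.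

Definition dual_norm_le (R : realType) (E : normedModType R) (f : dual E) (M : R) :=
  0 <= M /\ forall x : E, `|f x| <= M * `|x|.

Record bidual (R : realType) (E : normedModType R) := Bidual {
  bidual_fun :> dual E -> R;
  bidual_lin : forall (a : R) (f g h : dual E),
      (forall x, h x = a * f x + g x) ->
      bidual_fun h = a * bidual_fun f + bidual_fun g;
  bidual_bdd : exists C : R, forall (f : dual E) (M : R),
      dual_norm_le f M -> `|bidual_fun f| <= C * M }.

(* w(E^*,E) is the topology of pointwise convergence on E, i.e. the topology
   induced by the embedding E^* -> R^E (product topology) *)
Definition weak_star_compact (R : realType) (E : normedModType R) (K : set (dual E)) :=
  compact [set (dual_fun k : {ptws E -> R}) | k in K].

Definition dual_convex (R : realType) (E : normedModType R) (K : set (dual E)) :=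
  forall (k1 k2 : dual E) (t : R), K k1 -> K k2 -> 0 <= t <= 1 ->
    exists k, K k /\ forall x, k x = t * k1 x + (1 - t) * k2 x.

Definition support_fun (R : realType) (E : normedModType R) (K : set (dual E)) (x : E) : R :=
  sup [set k x | k in K].

Definition subdiff_graph (R : realType) (E : normedModType R) (f : E -> R)
  : set (E * dual E) :=
  [set p : E * dual E | forall y : E, f p.1 + p.2 (y - p.1) <= f y].

Definition fitzpatrick (R : realType) (E : normedModType R) (G : set (E * dual E))
  (x : E) (xs : dual E) : \bar R :=
  ereal_sup [set ((xs s.1 + s.2 x - s.2 s.1)%:E) | s in G] : \bar R.

Definition fitzpatrick_conj (R : realType) (E : normedModType R) (G : set (E * dual E))
  (ys : dual E) (yss : bidual E) : \bar R :=
  ereal_sup [set ((ys p.1 + yss p.2)%:E - fitzpatrick G p.1 p.2)%E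
            | p in [set: E * dual E]].

Definition fitz_ext_graph (R : realType) (E : normedModType R) (G : set (E * dual E))
  : set (dual E * bidual E) :=
  [set q : dual E * bidual E | fitzpatrick_conj G q.1 q.2 = (q.2 q.1)%:E].

(* Main.v *)
Require Import Defs.
From HB Require Import structures.
From mathcomp Require Import all_boot all_order all_algebra.
From mathcomp Require Import all_classical all_reals all_analysis.
From mathcomp Require Import lra ring.
Import Order.TTheory GRing.Theory Num.Theory.
Import numFieldNormedType.Exports.
Local Open Scope classical_set_scope.
Local Open Scope ring_scope.

HB.instance Definition ptws_pointed (R : realType) (E : normedModType R) :=
  isPointed.Build {ptws E -> R} (fun _ => 0%R).

Lemma dual0 {R : realType} {E : normedModType R} (k : dual E) : k 0 = 0.
Proof.
have := dual_lin k (-1) 0 0. rewrite scaler0 addr0 mulN1r addNr. by [].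
Qed.

Lemma dualD {R : realType} {E : normedModType R} (k : dual E) x y : k (x + y) = k x + k y.
Proof. by have := dual_lin k 1 x y; rewrite scale1r mul1r. Qed.

Lemma dualZ {R : realType} {E : normedModType R} (k : dual E) (a : R) x : k (a *: x) = a * k x.
Proof. by have := dual_lin k a x 0; rewrite addr0 dual0 addr0. Qed.

Lemma dualN {R : realType} {E : normedModType R} (k : dual E) x : k (- x) = - k x.
Proof. by rewrite -scaleN1r dualZ mulN1r. Qed.

Lemma dualB {R : realType} {E : normedModType R} (k : dual E) x y : k (x - y) = k x - k y.
Proof. by rewrite dualD dualN. Qed.

Lemma dual_sum {R : realType} {E : normedModType R} (k : dual E) (I : Type) (s : seq I)
  (l : I -> R) (v : I -> E) :
  k (\sum_(i <- s) l i *: v i) = \sum_(i <- s) l i * k (v i).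
Proof.
elim: s => [|i s IH]; first by rewrite !big_nil dual0.
by rewrite !big_cons dual_lin IH.
Qed.

Lemma dual_ext {R : realType} {E : normedModType R} (k1 k2 : dual E) :
  dual_fun k1 = dual_fun k2 -> k1 = k2.
Proof.
case: k1 k2 => f1 l1 b1 [f2 l2 b2] /= e; subst f2.
by rewrite (Prop_irrelevance l1 l2) (Prop_irrelevance b1 b2).
Qed.

Lemma max_attained {R : realType} {E : normedModType R} {K : set (dual E)}
  (K0 : K !=set0) (Kc : weak_star_compact K) (g : {ptws E -> R} -> R) :
  continuous g -> exists k, K k /\ forall k', K k' -> g (dual_fun k') <= g (dual_fun k).
Proof.
move=> gc.
set A := [set (dual_fun k : {ptws E -> R}) | k in K].
have cA : compact (g @` A).
  apply: continuous_compact => //; exact: continuous_subspaceT.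
have A0 : g @` A !=set0.
  by case: K0 => k Kk; exists (g (dual_fun k)); exists (dual_fun k) => //; exists k.
have hs := compact_has_sup A0 cA.
have : closure (g @` A) (sup (g @` A)) by apply: closure_sup => //; case: hs.
rewrite -(closure_id _).1; last exact: compact_closed.
case=> _ [k Kk <-] e; exists k; split => // k' Kk'.
rewrite e; apply: sup_upper_bound => //.
by exists (dual_fun k') => //; exists k'.
Qed.

Lemma fmax {R : realType} {E : normedModType R} {K : set (dual E)}
  (K0 : K !=set0) (Kc : weak_star_compact K) (x : E) :
  exists k, K k /\ support_fun K x = k x /\ forall k', K k' -> k' x <= k x.
Proof.
have gc : continuous (fun h : {ptws E -> R} => h x).
  exact: (@proj_continuous E (fun _ => R) x).
have [k [Kk kmax]] := max_attained K0 Kc _ gc.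
exists k; split => //; split => //.
rewrite /support_fun; apply/eqP; rewrite eq_le; apply/andP; split.
  apply: ge_sup; first by case: K0 => k0 ?; exists (k0 x), k0.
  by move=> _ [k' Kk' <-]; exact: kmax.
apply: sup_upper_bound; last by exists k.
split; first by exists (k x), k.
by exists (k x) => _ [k' Kk' <-]; exact: kmax.
Qed.

Lemma f_ub {R : realType} {E : normedModType R} {K : set (dual E)}
  (K0 : K !=set0) (Kc : weak_star_compact K) (x : E) k :
  K k -> k x <= support_fun K x.
Proof.
have [k1 [_ [-> m]]] := fmax K0 Kc x; exact: m.
Qed.

Lemma f_le {R : realType} {E : normedModType R} {K : set (dual E)}
  (K0 : K !=set0) (Kc : weak_star_compact K) (x : E) (m : R) :
  (forall k, K k -> k x <= m) -> support_fun K x <= m.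
Proof.
have [k1 [K1 [-> _]]] := fmax K0 Kc x; move=> h; exact: h.
Qed.

Lemma f0 {R : realType} {E : normedModType R} {K : set (dual E)}
  (K0 : K !=set0) (Kc : weak_star_compact K) : support_fun K 0 = 0.
Proof.
have [k1 [K1 [-> _]]] := fmax K0 Kc 0; exact: dual0.
Qed.


Lemma G_ge {R : realType} {E : normedModType R} {K : set (dual E)}
  (K0 : K !=set0) (Kc : weak_star_compact K) s (ss : dual E) :
  subdiff_graph (support_fun K) (s, ss) -> (support_fun K s <= ss s)%R.
Proof.
move=> /(_ (0%R:E)) /=; rewrite f0 // add0r dualN => h.
by rewrite -subr_le0.
Qed.

Lemma f_subadd {R : realType} {E : normedModType R} {K : set (dual E)}
  (K0 : K !=set0) (Kc : weak_star_compact K) x y :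
  (support_fun K (x + y) <= support_fun K x + support_fun K y)%R.
Proof.
apply: f_le => // k Kk; rewrite dualD; apply: lerD; exact: f_ub.
Qed.

Lemma G_le {R : realType} {E : normedModType R} {K : set (dual E)}
  (K0 : K !=set0) (Kc : weak_star_compact K) s (ss : dual E) :
  subdiff_graph (support_fun K) (s, ss) -> forall x, (ss x <= support_fun K x)%R.
Proof.
move=> H x; have := H (x + s); rewrite /= addrK => h.
have := f_subadd K0 Kc x s; move: h; set a := support_fun K _; lra.
Qed.

Lemma G_in {R : realType} {E : normedModType R} {K : set (dual E)}
  (K0 : K !=set0) (Kc : weak_star_compact K) s (k : dual E) :
  K k -> k s = support_fun K s -> subdiff_graph (support_fun K) (s, k).
Proof.
move=> Kk ks y /=; rewrite dualB -ks addrC subrK; exact: f_ub.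
Qed.

Lemma f_scale {R : realType} {E : normedModType R} {K : set (dual E)}
  (K0 : K !=set0) (Kc : weak_star_compact K) s (k1 : dual E) (t : R) :
  (0 <= t)%R -> K k1 -> k1 s = support_fun K s -> support_fun K (t *: s) = k1 (t *: s).
Proof.
move=> t0 K1 ks; apply/eqP; rewrite eq_le; apply/andP; split; last exact: f_ub.
apply: f_le => // k Kk; rewrite !dualZ ks; apply: ler_wpM2l => //; exact: f_ub.
Qed.

Local Open Scope ereal_scope.

Lemma fitz_K {R : realType} {E : normedModType R} {K : set (dual E)}
  (K0 : K !=set0) (Kc : weak_star_compact K) x (k : dual E) :
  K k -> fitzpatrick (subdiff_graph (support_fun K)) x k = (support_fun K x)%:E.
Proof.
move=> Kk; apply/eqP; rewrite eq_le; apply/andP; split.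
  apply: ge_ereal_sup => _ [[s ss] Gs <-] /=; rewrite lee_fin.
  have h1 := G_ge K0 Kc _ _ Gs; have h2 := G_le K0 Kc _ _ Gs x; have h3 := f_ub K0 Kc s _ Kk.
  lra.
have [k1 [K1 [e _]]] := fmax K0 Kc x.
apply: ereal_sup_ubound; exists ((0%R:E), k1) => /=.
  by apply: G_in => //; rewrite f0 // dual0.
rewrite !dual0 e /=; apply/eqP; rewrite eqe; apply/eqP; ring.
Qed.

Lemma fitz_inf {R : realType} {E : normedModType R} {K : set (dual E)}
  (K0 : K !=set0) (Kc : weak_star_compact K) x (xs : dual E) s0 :
  (support_fun K s0 < xs s0)%R ->
  fitzpatrick (subdiff_graph (support_fun K)) x xs = +oo.
Proof.
move=> lt.
have [k1 [K1 [e1 _]]] := fmax K0 Kc s0.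
have key : forall M : R, M%:E <= fitzpatrick (subdiff_graph (support_fun K)) x xs.
  move=> M.
  set d := (xs s0 - support_fun K s0)%R.
  have d0 : (0 < d)%R by rewrite subr_gt0.
  set t := ((`|M| + `|support_fun K (- x)|) / d)%R.
  have t0 : (0 <= t)%R by apply: divr_ge0; [exact: addr_ge0 | exact: ltW].
  have td : (t * d = `|M| + `|support_fun K (- x)|)%R by rewrite /t divfK // gt_eqF.
  apply: le_ereal_sup_tmp; exists (xs (t *: s0) + k1 x - k1 (t *: s0))%R%:E.
    exists (t *: s0, k1) => //=.
    apply: G_in => //; rewrite (f_scale K0 Kc s0 k1 t t0 K1) //.
  rewrite lee_fin !dualZ.
  have h1 : (k1 (- x) <= support_fun K (- x))%R by exact: f_ub.
  rewrite dualN in h1.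
  have h2 : (M <= `|M|)%R := ler_norm M.
  have h3 : (support_fun K (- x) <= `|support_fun K (- x)|)%R := ler_norm _.
  move: td; rewrite /d -e1 mulrBr; lra.
case E1 : (fitzpatrick _ x xs) key => [r| |] key //.
  by have := key (r + 1)%R; rewrite lee_fin => h; exfalso; lra.
by have := key 0%R.
Qed.
Local Close Scope ereal_scope.

Lemma sum_sq_expand {R : realType} {I : Type} (s : seq I) (t : R) (u l : I -> R) :
  \sum_(i <- s) (t * u i - l i)^+2 =
  \sum_(i <- s) l i ^+ 2 - 2 * t * \sum_(i <- s) l i * u i + t ^+ 2 * \sum_(i <- s) u i ^+ 2.
Proof.
elim: s => [|i s IH]; first by rewrite !big_nil; ring.
rewrite !big_cons IH; ring.
Qed.

Lemma sum_ge_term {R : realType} {I : eqType} (s : seq I) (F : I -> R) i :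
  (forall j, 0 <= F j) -> i \in s -> F i <= \sum_(j <- s) F j.
Proof.
move=> F0; elim: s => [|j s IH] //; rewrite inE big_cons => /orP[/eqP ->|/IH h].
  by rewrite lerDl sumr_ge0.
by rewrite (le_trans h) // lerDr.
Qed.

Lemma sum_ge0' {R : realType} {I : Type} (s : seq I) (F : I -> R) :
  (forall j, 0 <= F j) -> 0 <= \sum_(j <- s) F j.
Proof. by move=> F0; rewrite sumr_ge0. Qed.

Lemma cont_d {R : realType} {E : normedModType R} {I : Type} (s : seq I) (v : I -> E) (c : I -> R) :
  continuous (fun g : {ptws E -> R} => \sum_(i <- s) (g (v i) - c i)^+2).
Proof.
elim: s => [|i s IH].
  set F := (fun g : {ptws E -> R} => _).
  have -> : F = (fun _ => 0) by apply: funext => g; rewrite /F big_nil.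
  exact: cst_continuous.
set F := (fun g : {ptws E -> R} => _).
have h : continuous (fun g : {ptws E -> R} => g (v i) - c i).
  move=> g'; apply: continuousB; last exact: cst_continuous.
  exact: (@proj_continuous E (fun _ => R) (v i)).
have -> : F = (fun g : {ptws E -> R} => (g (v i) - c i) * (g (v i) - c i)) +
   (fun g : {ptws E -> R} => \sum_(i <- s) (g (v i) - c i)^+2).
  by apply: funext => g; rewrite /F big_cons expr2.
move=> g; apply: continuousD; last exact: IH.
exact: (continuousM (h g) (h g)).
Qed.


Lemma sep {R : realType} {E : normedModType R} {K : set (dual E)}
  (K0 : K !=set0) (Kc : weak_star_compact K) (Kconv : dual_convex K) (xs : dual E) :
  ~ K xs -> exists (s0 : E) (m : R), (forall k, K k -> k s0 <= m) /\ m < xs s0.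
Proof.
move=> nK.
set A := [set (dual_fun k : {ptws E -> R}) | k in K].
pose xp (h : {ptws E -> R}) : E := xget 0 [set x | h x != xs x].
pose dl (h : {ptws E -> R}) : R := `|h (xp h) - xs (xp h)| / 2.
pose U (h : {ptws E -> R}) : set {ptws E -> R} :=
  (fun g : {ptws E -> R} => g (xp h)) @^-1` ball (h (xp h)) (dl h).
have Aneq : forall h, A h -> exists x, h x != xs x.
  move=> _ [k Kk <-]; apply: contrapT => /forallNP H; apply: nK.
  suff -> : xs = k by [].
  apply: dual_ext; apply: funext => x.
  by have /negP := H x; rewrite negbK => /eqP.
have xpP : forall h, A h -> h (xp h) != xs (xp h).
  by move=> h Ah; exact: (xgetPex 0 (Aneq h Ah)).
have dl0 : forall h, A h -> 0 < dl h.
  by move=> h Ah; rewrite divr_gt0 // normr_gt0 subr_eq0 xpP.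
have Uop : forall h, A h -> open (U h).
  move=> h _; apply: open_comp; last exact: ball_open.
  move=> g _; exact: (@proj_continuous E (fun _ => R) (xp h)).
have cov : A `<=` \bigcup_(h in A) U h.
  move=> h Ah; exists h => //; rewrite /U /=; exact: ballxx (dl0 h Ah).
have Kcc : cover_compact A by rewrite -compact_cover; exact: Kc.
have [D' D'A Dcov] := Kcc _ A U Uop cov.
pose s := finmap.enum_fset D'.
pose d (g : {ptws E -> R}) := \sum_(i <- s) (g (xp i) - xs (xp i))^+2.
have dc : continuous (fun g => - d g).
  move=> g; apply: continuousN; exact: cont_d.
have [k0 [Kk0 k0min]] := max_attained K0 Kc _ dc.
pose l i := xs (xp i) - k0 (xp i).
have dl2 : d (dual_fun k0) = \sum_(i <- s) l i ^+ 2.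
  by apply: eq_bigr => i _; rewrite /l -sqrrN opprB.
have dk0 : 0 < d (dual_fun k0).
  have : A (dual_fun k0) by exists k0.
  move=> /Dcov [i Di Uik0].
  have Ai : A i by have := D'A i Di; rewrite inE.
  have pos : 0 < (k0 (xp i) - xs (xp i))^+2.
    rewrite lt0r sqrf_eq0 sqr_ge0 andbT subr_eq0; apply/negP => /eqP e.
    move: Uik0; rewrite /U /= /ball /= e => h1.
    have := dl0 i Ai; move: h1; rewrite /dl distrC; lra.
  apply: lt_le_trans pos _.
  apply: (sum_ge_term s (fun i => (k0 (xp i) - xs (xp i))^+2) i) => //.
  by move=> j; exact: sqr_ge0.
exists (\sum_(i <- s) l i *: xp i), (\sum_(i <- s) l i * k0 (xp i)).
split.
  move=> k Kk; rewrite dual_sum.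
  set a := \sum_(i <- s) l i * (k (xp i) - k0 (xp i)).
  have ea : a = \sum_(i <- s) l i * k (xp i) - \sum_(i <- s) l i * k0 (xp i).
    by rewrite /a -sumrB; apply: eq_bigr => i _; rewrite mulrBr.
  suff : a <= 0 by rewrite ea; lra.
  rewrite leNgt; apply/negP => a0.
  set b := \sum_(i <- s) (k (xp i) - k0 (xp i))^+2.
  have b0 : 0 <= b by apply: sumr_ge0 => i _; exact: sqr_ge0.
  have ab0 : 0 < a + b by lra.
  set t := a / (a + b).
  have tab : t * (a + b) = a by rewrite /t divfK // gt_eqF.
  have t0 : 0 < t by rewrite divr_gt0.
  have t1 : t <= 1 by rewrite ler_pdivrMr // mul1r; lra.
  have [kt [Kkt kte]] := Kconv k k0 t Kk Kk0 (andb_true_intro (conj (ltW t0) t1)).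
  have := k0min kt Kkt; rewrite lerN2 => hd.
  have edt : d (dual_fun kt) = \sum_(i <- s) (t * (k (xp i) - k0 (xp i)) - l i)^+2.
    by apply: eq_bigr => i _; rewrite kte /l; congr (_ ^+ 2); ring.
  rewrite edt sum_sq_expand dl2 -/a -/b in hd.
  have h1 : 0 <= t * (t * b - 2 * a).
    have -> : t * (t * b - 2 * a) = t ^+ 2 * b - 2 * t * a by ring.
    lra.
  rewrite pmulr_rge0 // in h1.
  have ta : 0 < t * a by rewrite mulr_gt0.
  move: tab h1 ta; rewrite mulrDr; lra.
rewrite dual_sum.
have -> : \sum_(i <- s) l i * xs (xp i) =
    \sum_(i <- s) l i * k0 (xp i) + \sum_(i <- s) l i ^+ 2.
  by rewrite -big_split; apply: eq_bigr => i _ /=; rewrite /l; ring.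
rewrite -dl2; lra.
Qed.

Lemma Kiff {R : realType} {E : normedModType R} {K : set (dual E)}
  (K0 : K !=set0) (Kc : weak_star_compact K) (Kconv : dual_convex K) (xs : dual E) :
  (forall x, xs x <= support_fun K x) -> K xs.
Proof.
move=> H; apply: contrapT => nK.
have [s0 [m [h1 h2]]] := sep K0 Kc Kconv xs nK.
have [k1 [K1 [e _]]] := fmax K0 Kc s0.
have := H s0; have := h1 k1 K1; rewrite e; lra.
Qed.

Theorem theorem3p8 (R : realType) (E : completeNormedModType R)
  (nzE : exists x : E, x != 0)
  (K : set (dual E)) (K0 : K !=set0)
  (Kc : weak_star_compact K) (Kconv : dual_convex K) :
  forall (ys : dual E) (yss : bidual E),
    fitz_ext_graph (subdiff_graph (support_fun K)) (ys, yss) <->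
    (K ys /\ (yss ys)%:E = ereal_sup [set (yss k)%:E | k in K]).
Proof.
move=> ys yss; rewrite /fitz_ext_graph /=.
split.
  move=> H.
  have hle : forall x k, K k -> (ys x + yss k - support_fun K x <= yss ys)%R.
    move=> x k Kk.
    have : ((ys x + yss k)%:E - fitzpatrick (subdiff_graph (support_fun K)) x k
           <= fitzpatrick_conj (subdiff_graph (support_fun K)) ys yss)%E.
      by apply: ereal_sup_ubound; exists (x, k).
    by rewrite H (fitz_K K0 Kc) // -EFinB lee_fin.
  have Kys : K ys.
    apply: (Kiff K0 Kc Kconv) => x; rewrite leNgt; apply/negP => lt.
    have [k Kk] := K0.
    set dd := (ys x - support_fun K x)%R.
    have d0 : (0 < dd)%R by rewrite subr_gt0.
    set t := ((`|yss ys| + `|yss k| + 1) / dd)%R.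
    have td : (t * dd = `|yss ys| + `|yss k| + 1)%R by rewrite /t divfK // gt_eqF.
    have t0 : (0 <= t)%R.
      by apply: divr_ge0; [rewrite addr_ge0 // addr_ge0 | exact: ltW].
    have h := hle (t *: x) k Kk.
    have hf : (support_fun K (t *: x) <= t * support_fun K x)%R.
      apply: f_le => // k' Kk'; rewrite dualZ; apply: ler_wpM2l => //; exact: f_ub.
    rewrite dualZ in h.
    have n1 : (yss ys <= `|yss ys|)%R := ler_norm _.
    have n2 : (- yss k <= `|yss k|)%R by rewrite -normrN ler_norm.
    move: td; rewrite /dd mulrBr; lra.
  split => //.
  apply/eqP; rewrite eq_le; apply/andP; split.
    by apply: ereal_sup_ubound; exists ys.
  apply: ge_ereal_sup => _ [k Kk <-]; rewrite lee_fin.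
  by have := hle 0 k Kk; rewrite dual0 (f0 K0 Kc) add0r subr0.
case=> Kys Hsup.
apply/eqP; rewrite eq_le; apply/andP; split.
  apply: ge_ereal_sup => _ [[x xs] _ <-] /=.
  case: (pselect (forall s, (xs s <= support_fun K s)%R)) => [hs | /existsNP [s0 /negP]].
    have Kxs := Kiff K0 Kc Kconv xs hs.
    rewrite (fitz_K K0 Kc) // -EFinB lee_fin.
    have : ((yss xs)%:E <= (yss ys)%:E)%E.
      by rewrite Hsup; apply: ereal_sup_ubound; exists xs.
    rewrite lee_fin => h1.
    have := f_ub K0 Kc x ys Kys; lra.
  rewrite -ltNge => lt; rewrite (fitz_inf K0 Kc x xs s0 lt) /=.
  exact: leNye.
apply: ereal_sup_ubound; exists (0, ys) => //=.
by rewrite (fitz_K K0 Kc) // -EFinB (f0 K0 Kc) dual0 add0r subr0.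
Qed.
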